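(* Let $z\ge1$, $X\subset[\Delta]^d$ finite, $x\in X$ and $p\in X$ fixed, and $r=\|x-p\|_2$. Let $Q\subseteq X$ be a set of at most $k$ centers containing $p$ that is a constant-factor approximation to the optimal $(k,z)$-medoids clustering on $X$ among sets containing a center at $p$, and let $\Psi$ be a constant-factor approximation to $\mathrm{Cost}(X,Q)$. Let $S$ be an optimal $(k,z)$-medoids clustering on $X$ among sets containing a center at $p$ and no center in the interior of $B_r(x)$. Let $n_b$ be the number of points of $X$ assigned by $Q$ to centers in $B_{r/2}(x)$ and let $n_a$ be the number of points assigned by $Q$ to centers in the annulus $B_r(x)\setminus B_{r/2}(x)$. If $n_b\ge n_a$, then there exist constants $\gamma_1,\gamma_2\ge1$ such that \[\mathrm{Cost}(X,S)\le\gamma_1(\Psi+n_b\cdot r^z)\le(\gamma_1\gamma_2)\cdot\mathrm{Cost}(X,S).\]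
   Context: $\mathrm{Cost}(X,C)=\sum_{y\in X}\min_{c\in C}\|y-c\|_2^z$; a point is assigned by $Q$ to its closest center in $Q$. A $(k,z)$-medoids clustering is a set of at most $k$ centers chosen from $X$. $B_\rho(x)$ denotes the Euclidean ball of radius $\rho$ centered at $x$. ''Constant-factor approximation'' means within a multiplicative constant factor; the constants $\gamma_1,\gamma_2$ may depend on these constants and on $z$. *)

(* Defs.v *)
From HB Require Import structures.
From mathcomp Require Import all_boot all_order all_algebra.
From mathcomp Require Import reals exp.
Set Implicit Arguments. Unset Strict Implicit. Unset Printing Implicit Defensive.
Import Order.TTheory GRing.Theory Num.Theory.
Local Open Scope ring_scope.

(* Grid points of [Delta]^d: coordinate i of v is (val (v i)) + 1 in {1..Delta};
   the +1 offset is irrelevant for distances and is omitted. *)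
Definition grid (d Delta : nat) := {ffun 'I_d -> 'I_Delta}.

Definition dist (R : realType) (d Delta : nat) (v w : grid d Delta) : R :=
  Num.sqrt (\sum_(i < d) (((v i : nat)%:R - (w i : nat)%:R) ^+ 2)).

(* min_{c in C} ||y - c||^z for a nonempty C (the identity element of the
   min-fold is the max over C, which is attained in C, so the fold is the true
   minimum; for the empty set this gives 0, never used). *)
Definition ptcost (R : realType) (d Delta : nat) (z : R) (y : grid d Delta)
    (C : {set grid d Delta}) : R :=
  \big[Num.min/ \big[Num.max/0]_(c in C) powR (dist R y c) z]_(c in C)
     powR (dist R y c) z.

Definition Cost (R : realType) (d Delta : nat) (z : R) (X C : {set grid d Delta}) : R :=
  \sum_(y in X) ptcost z y C.

(* Main.v *)
Require Import Defs.
From HB Require Import structures.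
From mathcomp Require Import all_boot all_order all_algebra.
From mathcomp Require Import reals exp.
From mathcomp Require Import ring lra.
Import Order.TTheory GRing.Theory Num.Theory.
Local Open Scope ring_scope.
Set Implicit Arguments.
Unset Strict Implicit.

Section Aux.
Variable R : realType.

Lemma lagrange (d : nat) (a b : 'I_d -> R) :
  (\sum_i a i * b i) ^+ 2 <= (\sum_i a i ^+ 2) * (\sum_i b i ^+ 2).
Proof.
have H : 0 <= \sum_i \sum_j (a i * b j - a j * b i) ^+ 2.
  by apply: sumr_ge0 => i _; apply: sumr_ge0 => j _; apply: sqr_ge0.
have E1 : (\sum_i a i ^+ 2) * (\sum_i b i ^+ 2) = \sum_i \sum_j (a i ^+ 2 * b j ^+ 2).
  by rewrite big_distrlr.
have E2 : (\sum_i a i ^+ 2) * (\sum_i b i ^+ 2) = \sum_i \sum_j (a j ^+ 2 * b i ^+ 2).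
  by rewrite mulrC big_distrlr /=; apply: eq_bigr => i _; apply: eq_bigr => j _; rewrite mulrC.
have E3 : (\sum_i a i * b i) ^+ 2 = \sum_i \sum_j ((a i * b i) * (a j * b j)).
  by rewrite expr2 big_distrlr.
have E : \sum_i \sum_j (a i * b j - a j * b i) ^+ 2 =
   \sum_i \sum_j (a i ^+ 2 * b j ^+ 2) + \sum_i \sum_j (a j ^+ 2 * b i ^+ 2)
   - 2 * \sum_i \sum_j ((a i * b i) * (a j * b j)).
  rewrite mulr_sumr -big_split -sumrB /=; apply: eq_bigr => i _.
  rewrite mulr_sumr -big_split -sumrB /=; apply: eq_bigr => j _.
  ring.
rewrite -E1 -E2 -E3 in E.
lra.
Qed.

Lemma cs (d : nat) (a b : 'I_d -> R) :
  \sum_i a i * b i <= Num.sqrt (\sum_i a i ^+ 2) * Num.sqrt (\sum_i b i ^+ 2).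
Proof.
have A0 : 0 <= \sum_i a i ^+ 2 by apply: sumr_ge0 => i _; apply: sqr_ge0.
rewrite -sqrtrM // (le_trans (ler_norm _)) // -sqrtr_sqr ler_sqrt ?lagrange //.
by apply: mulr_ge0 => //; apply: sumr_ge0 => i _; apply: sqr_ge0.
Qed.

Lemma tri (d : nat) (u v : 'I_d -> R) :
  Num.sqrt (\sum_i (u i + v i) ^+ 2) <=
  Num.sqrt (\sum_i u i ^+ 2) + Num.sqrt (\sum_i v i ^+ 2).
Proof.
have A0 : 0 <= \sum_i u i ^+ 2 by apply: sumr_ge0 => i _; apply: sqr_ge0.
have B0 : 0 <= \sum_i v i ^+ 2 by apply: sumr_ge0 => i _; apply: sqr_ge0.
set sA := Num.sqrt (\sum_i u i ^+ 2); set sB := Num.sqrt (\sum_i v i ^+ 2).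
have hA : 0 <= sA := sqrtr_ge0 _. have hB : 0 <= sB := sqrtr_ge0 _.
rewrite -(ger0_norm (addr_ge0 hA hB)) -sqrtr_sqr ler_sqrt; last by apply: sqr_ge0.
have -> : \sum_i (u i + v i) ^+ 2 = \sum_i u i ^+ 2 + \sum_i v i ^+ 2 + 2 * \sum_i u i * v i.
  rewrite mulr_sumr -!big_split /=; apply: eq_bigr => i _; ring.
have e1 : sA ^+ 2 = \sum_i u i ^+ 2 by rewrite sqr_sqrtr.
have e2 : sB ^+ 2 = \sum_i v i ^+ 2 by rewrite sqr_sqrtr.
have := cs u v; rewrite -/sA -/sB => h.
rewrite -e1 -e2; nra.
Qed.

Lemma dist_ge0 d D (a b : grid d D) : 0 <= dist R a b.
Proof. exact: sqrtr_ge0. Qed.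

Lemma distC d D (a b : grid d D) : dist R a b = dist R b a.
Proof. by rewrite /dist; congr Num.sqrt; apply: eq_bigr => i _; ring. Qed.

Lemma dist_tri d D (a b c : grid d D) : dist R a c <= dist R a b + dist R b c.
Proof.
rewrite /dist.
have -> : \sum_(i < d) (((a i : nat)%:R - (c i : nat)%:R) ^+ 2 : R) =
  \sum_(i < d) ((((a i : nat)%:R - (b i : nat)%:R) + ((b i : nat)%:R - (c i : nat)%:R)) ^+ 2 : R).
  by apply: eq_bigr => i _; congr (_ ^+ 2); ring.
exact: tri.
Qed.

Lemma sum_ind (T : finType) (X B : {set T}) (K : R) : B \subset X ->
  \sum_(y in X) (if y \in B then K else 0) = K *+ #|B|.
Proof.
move=> sBX; rewrite -big_mkcondr -sumr_const; apply: eq_bigl => y.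
by apply/andP/idP => [[]//|yB]; split => //; apply: (subsetP sBX).
Qed.

Lemma pw_le (z a b : R) : 0 <= z -> 0 <= a -> a <= b -> powR a z <= powR b z.
Proof.
move=> z0 a0 ab; apply: (ge0_ler_powR z0) => //; rewrite nnegrE //.
exact: le_trans ab.
Qed.

Lemma pw_add (z a b : R) : 0 <= z -> 0 <= a -> 0 <= b ->
  powR (a + b) z <= powR 2 z * (powR a z + powR b z).
Proof.
move=> z0 a0 b0.
wlog ab : a b a0 b0 / a <= b.
  move=> W; case: (leP a b) => h; first exact: W.
  by rewrite addrC [powR a z + _]addrC; apply: W => //; apply: ltW.
have h2 : a + b <= 2 * b by lra.
have := pw_le z0 (addr_ge0 a0 b0) h2. move=> h3. apply: (le_trans h3).
rewrite powRM //; apply: ler_wpM2l; first exact: powR_ge0.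
by rewrite lerDr powR_ge0.
Qed.

Lemma pw_ge1 (z a : R) : 1 <= z -> 1 <= a -> 1 <= powR a z.
Proof.
move=> z1 a1; have := ler_powR a1 z1; rewrite powRr1 //; last lra.
by move=> h; apply: le_trans h.
Qed.

Lemma ptcost_le (z : R) d D (y c : grid d D) (C : {set grid d D}) :
  c \in C -> ptcost z y C <= powR (dist R y c) z.
Proof.
by move=> cC; rewrite /ptcost (bigD1 c) //= ge_min lexx.
Qed.

Lemma ptcost_ge (z L : R) d D (y c0 : grid d D) (C : {set grid d D}) :
  c0 \in C -> (forall c, c \in C -> L <= powR (dist R y c) z) ->
  L <= ptcost z y C.
Proof.
move=> c0C H; rewrite /ptcost; apply: (big_ind (fun v => L <= v)).
- by rewrite (bigD1 c0) //= le_max H.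
- by move=> u v hu hv; rewrite le_min hu hv.
- by move=> c cC; apply: H.
Qed.
End Aux.

Unset Implicit Arguments.
Set Strict Implicit.

Theorem lemma3p9 (R : realType) (z alpha beta : R) :
  1 <= z -> 1 <= alpha -> 1 <= beta ->
  exists gamma1 gamma2 : R, 1 <= gamma1 /\ 1 <= gamma2 /\
  forall (d Delta k : nat) (X Q S : {set grid d Delta}) (x p : grid d Delta)
         (Psi : R) (sigma : grid d Delta -> grid d Delta),
    x \in X -> p \in X ->
    (* Q: at most k centers from X, containing p, alpha-approximate among such sets *)
    Q \subset X -> (#|Q| <= k)%N -> p \in Q ->
    (forall C : {set grid d Delta}, C \subset X -> (#|C| <= k)%N -> p \in C ->
       Cost z X Q <= alpha * Cost z X C) ->
    (* Psi: beta-approximation of Cost(X,Q) *)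
    Cost z X Q <= beta * Psi -> Psi <= beta * Cost z X Q ->
    (* S: optimal among sets with p and no center in the open ball of radius r *)
    S \subset X -> (#|S| <= k)%N -> p \in S ->
    (forall c, c \in S -> dist R x p <= dist R x c) ->
    (forall C : {set grid d Delta}, C \subset X -> (#|C| <= k)%N -> p \in C ->
       (forall c, c \in C -> dist R x p <= dist R x c) ->
       Cost z X S <= Cost z X C) ->
    (* sigma: assignment of each point of X to a closest center of Q *)
    (forall y, y \in X -> sigma y \in Q /\
       (forall c, c \in Q -> dist R y (sigma y) <= dist R y c)) ->
    let r := dist R x p in
    let n_b := #|[set y in X | dist R x (sigma y) <= r / 2]| in
    let n_a := #|[set y in X | (r / 2 < dist R x (sigma y)) && (dist R x (sigma y) <= r)]| in
    (n_a <= n_b)%N ->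
    Cost z X S <= gamma1 * (Psi + n_b%:R * powR r z) /\
    gamma1 * (Psi + n_b%:R * powR r z) <= (gamma1 * gamma2) * Cost z X S.
Proof.
move=> z1 a1 b1.
have z0 : 0 <= z by lra.
set t2 := powR 2 z; set t4 := powR 4 z.
have t21 : 1 <= t2 by apply: pw_ge1 => //; lra.
have t41 : 1 <= t4 by apply: pw_ge1 => //; lra.
exists (t2 * beta + 2 * (t2 * t2)), (alpha * beta + t4 * (alpha + 1)).
split; first nra. split; first nra.
move=> d D k X Q S x p Psi sigma xX pX QX Qk pQ HQ Psi1 Psi2 SX Sk pS Sfar HS Hsig r nb na hna.
have pw0 : forall a, 0 <= powR a z := fun a => powR_ge0 a z.
have r0 : 0 <= r by apply: dist_ge0.
have cost0 : forall y (C : {set grid d D}), p \in C -> 0 <= ptcost z y C.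
  by move=> y C pC; apply: (ptcost_ge pC) => c _.
have CQ0 : 0 <= Cost z X Q by apply: sumr_ge0 => y _; apply: cost0.
have CS0 : 0 <= Cost z X S by apply: sumr_ge0 => y _; apply: cost0.
have CQm : \sum_(y in X) powR (dist R y (sigma y)) z <= Cost z X Q.
  apply: ler_sum => y yX; apply: (ptcost_ge pQ) => c cQ.
  exact: (pw_le z0 (dist_ge0 _ _ _) ((Hsig y yX).2 c cQ)).
have Psi0 : 0 <= Psi by nra.
split.
-
  set C := [set c in Q | r <= dist R x c].
  have CQ : C \subset Q by apply/subsetP => c; rewrite inE => /andP[].
  have CX : C \subset X by apply: subset_trans CQ QX.
  have Ck : (#|C| <= k)%N by apply: leq_trans (subset_leq_card CQ) Qk.
  have pC : p \in C by rewrite inE pQ lexx.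
  have HSC := HS C CX Ck pC (fun c => ltac:(by rewrite inE => /andP[_])).
  set B := [set y in X | dist R x (sigma y) < r].
  set K := t2 * t2 * powR r z.
  have K0 : 0 <= K by rewrite /K; apply: mulr_ge0 => //; nra.
  have pt1 : forall y, y \in X -> ptcost z y C <=
      t2 * powR (dist R y (sigma y)) z + (if y \in B then K else 0).
    move=> y yX; have [sQ _] := Hsig y yX.
    case: (leP r (dist R x (sigma y))) => h.
    + have sC : sigma y \in C by rewrite inE sQ h.
      apply: le_trans (ptcost_le z y sC) _.
      have i0 : 0 <= (if y \in B then K else 0) by case: ifP.
      have := pw0 (dist R y (sigma y)); nra.
    + have yB : y \in B by rewrite inE yX h.
      rewrite yB; apply: le_trans (ptcost_le z y pC) _.
      have e : dist R y p <= dist R y (sigma y) + 2 * r.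
        apply: le_trans (dist_tri R y (sigma y) p) _.
        have := dist_tri R (sigma y) x p; rewrite (distC R (sigma y) x) -/r; lra.
      apply: le_trans (pw_le z0 (dist_ge0 _ _ _) e) _.
      have r2 : 0 <= 2 * r by lra.
      apply: le_trans (pw_add z0 (dist_ge0 _ _ _) r2) _.
      rewrite powRM // -/t2 /K; lra.
  have sumC : Cost z X C <= t2 * Cost z X Q + K *+ #|B|.
    rewrite /Cost; apply: le_trans (ler_sum _ pt1) _.
    rewrite big_split /= -mulr_sumr sum_ind; last first.
      by apply/subsetP => y; rewrite inE => /andP[].
    by rewrite lerD2r; apply: ler_wpM2l => //; lra.
  have cardB : (#|B| <= nb + na)%N.
    apply: leq_trans (subset_leq_card (_ : B \subset
      [set y in X | dist R x (sigma y) <= r / 2] :|: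
      [set y in X | (r / 2 < dist R x (sigma y)) && (dist R x (sigma y) <= r)])) _.
      apply/subsetP => y; rewrite !inE => /andP[yX h]; rewrite yX /=.
      case: (leP (dist R x (sigma y)) (r / 2)) => h2 //=.
      by rewrite ltW.
    by rewrite cardsU leq_subr.
  have cardB2 : (#|B| <= 2 * nb)%N.
    by apply: leq_trans cardB _; rewrite mul2n -addnn leq_add2l.
  have cardBR : (#|B|%:R : R) <= 2 * nb%:R.
    by rewrite -(natrM R 2 nb) ler_nat.
  rewrite -mulr_natr in sumC.
  have e1 : t2 * Cost z X Q <= t2 * (beta * Psi) by apply: ler_wpM2l => //; lra.
  have e2 : K * #|B|%:R <= K * (2 * nb%:R) by apply: ler_wpM2l.
  have f1 : 0 <= t2 * t2 * Psi by apply: mulr_ge0 => //; nra.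
  have nb0 : (0 : R) <= nb%:R by [].
  have f2 : 0 <= t2 * beta * (nb%:R * powR r z).
    by apply: mulr_ge0; [nra| apply: mulr_ge0].
  have G : (t2 * beta + 2 * (t2 * t2)) * (Psi + nb%:R * powR r z) =
    t2 * (beta * Psi) + 2 * (t2 * t2 * Psi) + t2 * beta * (nb%:R * powR r z)
    + K * (2 * nb%:R) by rewrite /K; ring.
  rewrite G; lra.
-
  set Nb := [set y in X | dist R x (sigma y) <= r / 2].
  have r4 : 0 <= r / 4 by lra.
  have pt2 : forall y, y \in X ->
      (if y \in Nb then powR (r / 4) z else 0) <= ptcost z y Q + ptcost z y S.
    move=> y yX; case: ifP => [|_]; last by apply: addr_ge0; apply: cost0.
    rewrite inE yX /= => h; have [sQ hs] := Hsig y yX.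
    have c1 := cost0 y Q pQ; have c2 := cost0 y S pS.
    case: (leP (r / 4) (dist R y (sigma y))) => hm.
    + have : powR (r / 4) z <= ptcost z y Q.
        apply: (ptcost_ge pQ) => c cQ.
        exact: (pw_le z0 r4 (le_trans hm (hs c cQ))).
      lra.
    + have : powR (r / 4) z <= ptcost z y S.
        apply: (ptcost_ge pS) => c cS; apply: (pw_le z0 r4).
        have := Sfar c cS; have := dist_tri R x y c; have := dist_tri R x (sigma y) y.
        rewrite (distC R (sigma y) y) -/r; lra.
      lra.
  have sum2 : powR (r / 4) z *+ nb <= Cost z X Q + Cost z X S.
    rewrite /nb -/Nb -(@sum_ind R _ X Nb); last by apply/subsetP => y; rewrite inE => /andP[].
    by rewrite /Cost -big_split; apply: ler_sum.
  have pr4 : powR r z = t4 * powR (r / 4) z.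
    have e4 : 4 * (r / 4) = r by lra.
    by rewrite /t4 -powRM // ?e4 //; lra.
  have HQS := HQ S SX Sk pS.
  rewrite -mulrA; apply: ler_wpM2l; first nra.
  rewrite -mulr_natl in sum2.
  have e1 : beta * Cost z X Q <= beta * (alpha * Cost z X S) by apply: ler_wpM2l => //; lra.
  have e2 : t4 * (nb%:R * powR (r / 4) z) <= t4 * (Cost z X Q + Cost z X S).
    by apply: ler_wpM2l => //; lra.
  have e3 : t4 * Cost z X Q <= t4 * (alpha * Cost z X S).
    by apply: ler_wpM2l => //; lra.
  have G : Psi + nb%:R * (t4 * powR (r / 4) z) = Psi + t4 * (nb%:R * powR (r / 4) z) by ring.
  have G2 : (alpha * beta + t4 * (alpha + 1)) * Cost z X S =
     beta * (alpha * Cost z X S) + t4 * (alpha * Cost z X S) + t4 * Cost z X S by ring.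
  rewrite pr4 G G2; lra.
Qed.
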